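(* Let $V=\{n\in\mathbb{Z} : n\geq 2,\ 5\nmid n\}$ and let $\Gamma_5$ be the directed graph on $V$ with up-edges $(n,(n+5)^2)$ for $n\in V$ and down-edges $(n^2,n)$ for $n\in V$. Then no path in $\Gamma_5$ contains $UUDD$ as a subpath; that is, there do not exist vertices $x,a,z,b,y\in V$ such that $(x,a)$ and $(a,z)$ are up-edges and $(z,b)$ and $(b,y)$ are down-edges (equivalently, $a=(x+5)^2$, $z=(a+5)^2$, $z=b^2$, $b=y^2$).
   Context: Each edge of a path is labelled $U$ if it is an up-edge and $D$ if it is a down-edge; a path contains $UUDD$ as a subpath if it has four consecutive edges labelled $U,U,D,D$. *)

(* Defs.v *)
From Stdlib Require Import ZArith.
Open Scope Z_scope.

Definition inV (n : Z) : Prop := 2 <= n /\ ~ (5 | n).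

Definition up_edge (u v : Z) : Prop := inV u /\ v = (u + 5) ^ 2.

Definition down_edge (u v : Z) : Prop := inV v /\ u = v ^ 2.

(* Main.v *)
Require Import Defs.
From Stdlib Require Import ZArith Lia.
Open Scope Z_scope.

Theorem theorem7 :
  ~ exists x a z b y : Z,
      inV x /\ inV a /\ inV z /\ inV b /\ inV y /\
      up_edge x a /\ up_edge a z /\ down_edge z b /\ down_edge b y.
Proof.
  intros [x [a [z [b [y H]]]]].
  destruct H as [[Hx _] [[Ha _] [_ [[Hb _] [[Hy _] [[_ E1] [[_ E2] [[_ E3] [_ E4]]]]]]]]].
  assert (Hba : b = a + 5).
  { assert ((b - (a+5)) * (b + (a+5)) = 0) by nia.
    apply Z.mul_eq_0 in H. lia. }
  subst z b a.
  assert (Hyx : y >= x + 6).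
  { destruct (Z_lt_ge_dec y (x+6)) as [L|L]; [|exact L].
    assert (y <= x + 5) by lia. nia. }
  nia.
Qed.
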